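(* Let $n\ge1$ and consider the block decomposition $\{X_j\}_{j\le n}$ of $\mathbb R^n$ with the metric $d_1$. Then for every nonempty $J\subseteq\{0,1,\dots,n\}$ and every $R>0$, $$\bigcap_{j\in J}N_1(X_j,R)\subseteq N_1\Big(\bigcap_{j\in J}X_j,nR\Big);$$ in particular the block decomposition is coarsely excisive for $d_1$.
   Context: $d_1(x,y)=\sum_{j<n}|x_j-y_j|$ on $\mathbb R^n$ and $N_1(Y,R)=\{x:\inf_{y\in Y}d_1(x,y)\le R\}$. The block decomposition of $\mathbb R^n$ consists of the $n+1$ sets $X_0=(-\infty,0]\times\mathbb R^{n-1}$, $X_j=[0,\infty)^j\times(-\infty,0]\times\mathbb R^{n-j-1}$ for $0<j<n$, and $X_n=[0,\infty)^n$. *)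

(* Defs.v *)
From Stdlib Require Import Reals Lra Lia.
Open Scope R_scope.

(* A point of R^n is represented by its coordinate function nat -> R;
   only coordinates j < n are relevant (all definitions below ignore
   coordinates j >= n). *)
Definition pt := nat -> R.

Fixpoint d1 (n : nat) (x y : pt) : R :=
  match n with
  | O => 0
  | S m => d1 m x y + Rabs (x m - y m)
  end.

(* N_1(Y,R) = { x : inf_{y in Y} d_1(x,y) <= R }, with inf of the empty set = +oo.
   inf_{y in Y} d1 x y <= R  unfolds to: for every eps > 0 there is y in Y
   with d1 x y < R + eps. *)
Definition N1 (n : nat) (Y : pt -> Prop) (r : R) (x : pt) : Prop :=
  forall eps : R, 0 < eps -> exists y : pt, Y y /\ d1 n x y < r + eps.

(* Block decomposition of R^n:
   X_0 = (-oo,0] x R^{n-1},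
   X_j = [0,oo)^j x (-oo,0] x R^{n-j-1}  (0 < j < n),
   X_n = [0,oo)^n.
   Uniformly: X_j = { x : x_i >= 0 for i < j, and x_j <= 0 if j < n }. *)
Definition block (n j : nat) (x : pt) : Prop :=
  (forall i : nat, (i < j)%nat -> 0 <= x i) /\ ((j < n)%nat -> x j <= 0).

(* Main.v *)
From Pilot Require Import Defs.
From Stdlib Require Import Reals Lra Lia ClassicalEpsilon.
Open Scope R_scope.
Local Notation d1 := Pilot.Defs.d1.

Lemma d1_ge (n : nat) (x y : pt) (i : nat) : (i < n)%nat -> Rabs (x i - y i) <= d1 n x y.
Proof.
  induction n as [|m IH]; intros H; [lia|]. simpl.
  assert (d1 m x y >= 0 -> Rabs (x i - y i) <= d1 m x y + Rabs (x m - y m)).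
  2:{ apply H0. clear. induction m; simpl. lra. pose proof (Rabs_pos (x m - y m)); lra. }
  intros Hd. destruct (Nat.eq_dec i m) as [->|Hne].
  - lra.
  - pose proof (Rabs_pos (x m - y m)). assert (i < m)%nat by lia. specialize (IH H1); lra.
Qed.

Lemma lim_le (a r : R) : (forall eps, 0 < eps -> a < r + eps) -> a <= r.
Proof.
  intros H. destruct (Rle_dec a r) as [h|h]; auto.
  specialize (H ((a - r)/2)). lra.
Qed.

Lemma neg_bound (n j : nat) (r : R) (x : pt) (i : nat) : (j <= n)%nat -> N1 n (block n j) r x -> (i < j)%nat -> - x i <= r.
Proof.
  intros Hj HN Hi. apply lim_le. intros eps he.
  destruct (HN eps he) as [y [[Hb _] Hd]].
  pose proof (d1_ge n x y i ltac:(lia)). pose proof (Hb i Hi).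
  pose proof (Rle_abs (-(x i - y i))). rewrite Rabs_Ropp in H1. lra.
Qed.

Lemma pos_bound (n j : nat) (r : R) (x : pt) : (j < n)%nat -> N1 n (block n j) r x -> x j <= r.
Proof.
  intros Hj HN. apply lim_le. intros eps he.
  destruct (HN eps he) as [y [[_ Hb] Hd]].
  pose proof (d1_ge n x y j Hj). pose proof (Hb Hj).
  pose proof (Rle_abs (x j - y j)). lra.
Qed.

Lemma d1_bound (x y : pt) (r : R) (n : nat) : (forall i, (i < n)%nat -> Rabs (x i - y i) <= r) ->
  forall m, (m <= n)%nat -> d1 m x y <= INR m * r.
Proof.
  intros H m. induction m; intros Hm. simpl; lra. change (d1 (S m) x y) with (d1 m x y + Rabs (x m - y m)). rewrite S_INR.
  specialize (IHm ltac:(lia)). specialize (H m ltac:(lia)). lra.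
Qed.

Theorem proposition5p6p17 :
  forall (n : nat), (1 <= n)%nat ->
  forall (J : nat -> Prop),
    (forall j, J j -> (j <= n)%nat) ->
    (exists j, J j) ->
  forall (r : R), 0 < r ->
  forall x : pt,
    (forall j, J j -> N1 n (block n j) r x) ->
    N1 n (fun y => forall j, J j -> block n j y) (INR n * r) x.
Proof.
  intros n Hn J HJ Hne r Hr x HN eps He.
  set (y := fun i => if excluded_middle_informative (exists j, J j /\ (i < j)%nat)
     then (if excluded_middle_informative (J i) then 0 else Rmax (x i) 0)
     else (if excluded_middle_informative (J i) then Rmin (x i) 0 else x i)).
  exists y. split.
  - intros j Jj. split.
    + intros i Hi. unfold y.
      destruct (excluded_middle_informative (exists j, J j /\ (i < j)%nat)) as [A|A].
      * destruct (excluded_middle_informative (J i)). lra. apply Rmax_r.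
      * exfalso. apply A. eauto.
    + intros Hj. unfold y.
      destruct (excluded_middle_informative (exists j0, J j0 /\ (j < j0)%nat)) as [A|A];
      destruct (excluded_middle_informative (J j)) as [B|B]; try contradiction.
      lra. apply Rmin_r.
  - assert (d1 n x y <= INR n * r); [|lra].
    apply (d1_bound x y r n); [|lia].
    intros i Hi. unfold y.
    destruct (excluded_middle_informative (exists j, J j /\ (i < j)%nat)) as [[j [Jj Hij]]|A].
    + pose proof (neg_bound n j r x i (HJ j Jj) (HN j Jj) Hij).
      destruct (excluded_middle_informative (J i)) as [B|B].
      * pose proof (pos_bound n i r x Hi (HN i B)).
        rewrite Rminus_0_r. apply Rabs_le. lra.
      * unfold Rmax. destruct (Rle_dec (x i) 0).
        rewrite Rminus_0_r. apply Rabs_le. lra.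
        rewrite Rminus_diag, Rabs_R0. lra.
    + destruct (excluded_middle_informative (J i)) as [B|B].
      * pose proof (pos_bound n i r x Hi (HN i B)).
        unfold Rmin. destruct (Rle_dec (x i) 0).
        rewrite Rminus_diag, Rabs_R0. lra.
        rewrite Rminus_0_r. apply Rabs_le. lra.
      * rewrite Rminus_diag, Rabs_R0. lra.
Qed.
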